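(* For each $k\in\{1,2\}$ there is an $\exists_k$-axiomatizable $\aleph_0$-categorical theory $T$ in a finite relational vocabulary such that $\mathrm{Mod}(T)$ is $\boldsymbol\Pi^0_{k+1}$-complete. Concretely: for $k=1$, the theory in one unary predicate $P$ saying that $P$ is infinite and coinfinite; for $k=2$, the theory in one binary relation $R$ saying $R$ is irreflexive and symmetric, every $x$ has at most one $y$ with $R(x,y)$, and there are infinitely many $x$ with $\exists y\,R(x,y)$ and infinitely many $x$ with $\neg\exists y\,R(x,y)$.
   Context: $\mathrm{Mod}(\tau)\subseteq 2^\omega$ is the Polish space of atomic diagrams of $\tau$-structures with universe $\omega$; $\mathrm{Mod}(T)$ is the subset of models of $T$. $\Gamma$-complete means in $\Gamma$ and every $\Gamma$ subset of $2^\omega$ continuously (Wadge) reduces to it. $\exists_k$-axiomatizable: axiomatized by prenex sentences with $k$ alternating quantifier blocks starting with $\exists$. *)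

(* Defs.v *)
From HB Require Import structures.
From mathcomp Require Import all_boot.
From mathcomp Require Import boolp classical_sets functions cardinality topology cantor.
Set Implicit Arguments.
Unset Strict Implicit.
Unset Printing Implicit Defensive.
Local Open Scope classical_set_scope.

Record vocab := Vocab { vsym : finType; varity : vsym -> nat }.

Inductive formula (L : vocab) : Type :=
| FFalse : formula L
| FEq : nat -> nat -> formula L
| FRel : forall s : vsym L, ('I_(varity s) -> nat) -> formula L
| FNot : formula L -> formula L
| FAnd : formula L -> formula L -> formula L
| FOr : formula L -> formula L -> formula L
| FImp : formula L -> formula L -> formula L
| FEx : nat -> formula L -> formula L
| FAll : nat -> formula L -> formula L.
Arguments FFalse {L}.

Record structure (L : vocab) := Structure {
  carrier :> Type;
  rel : forall s : vsym L, ('I_(varity s) -> carrier) -> Prop }.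

Definition upd {M : Type} (e : nat -> M) (x : nat) (a : M) : nat -> M :=
  fun y => if y == x then a else e y.

Fixpoint sat {L : vocab} (M : structure L) (e : nat -> M) (phi : formula L) : Prop :=
  match phi with
  | FFalse => False
  | FEq x y => e x = e y
  | FRel s args => @rel L M s (fun i => e (args i))
  | FNot p => ~ @sat L M e p
  | FAnd p q => @sat L M e p /\ @sat L M e q
  | FOr p q => @sat L M e p \/ @sat L M e q
  | FImp p q => @sat L M e p -> @sat L M e q
  | FEx x p => exists a : M, @sat L M (upd e x a) p
  | FAll x p => forall a : M, @sat L M (upd e x a) p
  end.

Fixpoint free {L : vocab} (phi : formula L) (x : nat) : Prop :=
  match phi with
  | FFalse => False
  | FEq y z => x = y \/ x = z
  | FRel s args => exists i, args i = x
  | FNot p => free p x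
  | FAnd p q | FOr p q | FImp p q => free p x \/ free q x
  | FEx y p | FAll y p => x <> y /\ free p x
  end.

Definition sentence {L : vocab} (phi : formula L) := forall x, ~ free phi x.

Fixpoint qfree {L : vocab} (phi : formula L) : Prop :=
  match phi with
  | FFalse | FEq _ _ | FRel _ _ => True
  | FNot p => qfree p
  | FAnd p q | FOr p q | FImp p q => qfree p /\ qfree q
  | FEx _ _ | FAll _ _ => False
  end.

(* prenex formula with k alternating (possibly empty) quantifier blocks,
   the first block existential iff ex = true *)
Fixpoint prenex {L : vocab} (ex : bool) (k : nat) (phi : formula L) : Prop :=
  match k with
  | 0 => qfree phi
  | k'.+1 => exists (xs : seq nat) (psi : formula L),
      phi = foldr (if ex then @FEx L else @FAll L) psi xs /\ prenex (~~ ex) k' psi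
  end.

Definition Ek {L : vocab} (k : nat) (phi : formula L) := prenex true k phi.

Definition theory (L : vocab) := set (formula L).

Definition models {L : vocab} (M : structure L) (T : theory L) :=
  forall phi, T phi -> forall e : nat -> M, @sat L M e phi.

Definition Ek_axiomatizable {L : vocab} (k : nat) (T : theory L) :=
  exists S : theory L, (forall phi, S phi -> sentence phi /\ Ek k phi) /\
    forall M : structure L, models M S <-> models M T.

Definition isomorphic {L : vocab} (M N : structure L) :=
  exists h : M -> N, bijective h /\
    forall s (a : 'I_(varity s) -> M), @rel L M s a <-> @rel L N s (h \o a).

Definition countably_infinite {L : vocab} (M : structure L) :=
  exists h : nat -> M, bijective h.

Definition aleph0_categorical {L : vocab} (T : theory L) :=
  (exists M : structure L, countably_infinite M /\ models M T) /\
  forall M N : structure L, countably_infinite M -> countably_infinite N ->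
    models M T -> models N T -> isomorphic M N.

Definition Th {L : vocab} (K : structure L -> Prop) : theory L :=
  [set phi | sentence phi /\ forall M, K M -> models M [set phi]].

(* atomic facts R(a_1..a_n) with parameters from omega *)
Definition diag_index (L : vocab) := {s : vsym L & 'I_(varity s) -> nat}.

(* Mod(L) = 2^(atomic facts), with the product (Cantor) topology *)
Definition ModSpace (L : vocab) : topologicalType :=
  prod_topology (fun _ : diag_index L => bool).

Definition struct_of_diag {L : vocab} (x : ModSpace L) : structure L :=
  @Structure L nat (fun s a => x (existT _ s a) = true).

Definition Mod {L : vocab} (T : theory L) : set (ModSpace L) :=
  [set x | models (struct_of_diag x) T].

(* SigmaS n = Sigma^0_(n+1) *)
Fixpoint SigmaS {X : topologicalType} (n : nat) (A : set X) : Prop :=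
  match n with
  | 0 => open A
  | m.+1 => exists F : nat -> set X,
      (forall i, SigmaS m (~` F i)) /\ A = \bigcup_i F i
  end.

Definition Sigma0 {X : topologicalType} (n : nat) (A : set X) : Prop :=
  match n with 0 => False | m.+1 => SigmaS m A end.

Definition Pi0 {X : topologicalType} (n : nat) (A : set X) : Prop :=
  Sigma0 n (~` A).

Definition Pi0_complete {X : topologicalType} (n : nat) (A : set X) : Prop :=
  Pi0 n A /\
  forall B : set cantor_space, Pi0 n B ->
    exists f : cantor_space -> X, continuous f /\ B = f @^-1` A.

Definition L1 : vocab := @Vocab unit (fun _ => 1%N).
Definition P1 (M : structure L1) (m : M) : Prop := @rel _ M tt (fun _ => m).
Definition K1 (M : structure L1) : Prop :=
  infinite_set [set m | @P1 M m] /\ infinite_set [set m | ~ @P1 M m].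
Definition T1 : theory L1 := Th K1.

Definition L2 : vocab := @Vocab unit (fun _ => 2%N).
Definition R2 (M : structure L2) (x y : M) : Prop :=
  @rel _ M tt (fun i : 'I_2 => if val i == 0%N then x else y).
Definition K2 (M : structure L2) : Prop :=
  [/\ (forall x, ~ @R2 M x x),
      (forall x y, @R2 M x y -> @R2 M y x),
      (forall x y z, @R2 M x y -> @R2 M x z -> y = z),
      infinite_set [set x | exists y, @R2 M x y] &
      infinite_set [set x | ~ exists y, @R2 M x y]].
Definition T2 : theory L2 := Th K2.

(* Main.v *)
Require Import Defs.
From mathcomp Require Import all_boot.
From mathcomp Require Import boolp classical_sets functions cardinality topology cantor.
From HB Require Import structures.
From mathcomp Require Import mathcomp_extra zify.
Set Implicit Arguments.
Unset Strict Implicit.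
Unset Printing Implicit Defensive.
Local Open Scope classical_set_scope.
Local Open Scope card_scope.

Definition cyl (x : cantor_space) (n : nat) : set cantor_space :=
  [set y | forall m, (m < n)%N -> y m = x m].

Lemma cyl_nbhs (x : cantor_space) n : nbhs x (cyl x n).
Proof.
elim: n => [|n IH]; first by rewrite (_ : cyl x 0 = setT); [exact: filterT|apply/seteqP; split=> y // _ m; rewrite ltn0].
have hn : nbhs x (proj n @^-1` [set x n] : set cantor_space).
  apply: open_nbhs_nbhs; split => //.
  apply: open_comp; [move=> + _; exact: proj_continuous| apply: discrete_open].
apply: filterS (filterI IH hn) => y [Hy Hn] m.
rewrite ltnS leq_eqVlt => /predU1P[->|]; [exact: Hn| exact: Hy].
Qed.

Lemma cyl_sub x n n' : (n <= n')%N -> forall y, cyl x n' y -> cyl x n y.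
Proof. by move=> le y Hy m mn; apply: Hy; exact: leq_trans mn le. Qed.
Arguments cyl_sub {x n n'} _ {y} _.

Lemma nbhs_cyl (x : cantor_space) (U : set cantor_space) :
  nbhs x U -> exists n, cyl x n `<=` U.
Proof.
pose F := filter_from [set: nat] (cyl x).
have FF : Filter F.
  apply: filter_from_filter; first by exists 0%N.
  move=> i j _ _; exists (maxn i j) => //; rewrite subsetI; split;
    apply: cyl_sub; [exact: leq_maxl|exact: leq_maxr].
have : F --> (x : cantor_space).
  apply/cvg_sup => i.
  move=> A /= [V [[W oW <-] Wx] VA].
  exists i.+1 => // y Hy; apply: VA => /=.
  by rewrite (Hy i (ltnSn i)).
by move=> Fx /Fx [n _ Hn]; exists n.
Qed.

Fixpoint memT {T : Type} (c : T) (l : seq T) : Prop :=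
  if l is d :: l' then d = c \/ memT c l' else False.

HB.instance Definition _ (L : vocab) := gen_eqMixin (diag_index L).

Section ModTop.
Variable L : vocab.

Lemma coord_nbhs (x : ModSpace L) (c : diag_index L) :
  nbhs x [set y : ModSpace L | y c = x c].
Proof.
apply: open_nbhs_nbhs; split => //.
have -> : [set y : ModSpace L | y c = x c] = proj c @^-1` [set x c] by [].
apply: open_comp; [move=> + _; exact: proj_continuous| apply: discrete_open].
Qed.

Lemma agree_nbhs (x : ModSpace L) (l : seq (diag_index L)) :
  nbhs x [set y : ModSpace L | forall c, memT c l -> y c = x c].
Proof.
elim: l => [|c l IH].
  by apply: filterS (@filterT _ (nbhs x) _) => y _ c.
apply: filterS (filterI IH (coord_nbhs x c)) => y [Hy Hc] d /= [<-|]//.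
exact: Hy.
Qed.

Lemma open_loc (S : set (ModSpace L)) :
  (forall x, S x -> exists l : seq (diag_index L),
     forall y, (forall c, memT c l -> y c = x c) -> S y) -> open S.
Proof.
move=> H; rewrite openE => x Sx; have [l Hl] := H x Sx.
exact: filterS (agree_nbhs x l).
Qed.

Definition locdet {T : Type} (f : cantor_space -> T) :=
  forall x, exists n, forall y, cyl x n y -> f y = f x.

Lemma cont_into (f : cantor_space -> ModSpace L) :
  (forall c, locdet (fun x => f x c)) -> continuous f.
Proof.
move=> H x; apply/cvg_sup => c A /= [V [[W oW <-] Wx] VA].
have [n Hn] := H c x.
apply: filterS (cyl_nbhs x n) => y /Hn Hy; apply: VA => /=.
by rewrite /= Hy.
Qed.

End ModTop.

Section Seqlem.
Variable lev : nat -> nat.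
Hypothesis mono : forall n, (lev n <= lev n.+1)%N.

Lemma lev_le m n : (m <= n)%N -> (lev m <= lev n)%N.
Proof.
move=> /subnK <-; elim: (n - m)%N => [|k IH]; first by rewrite add0n.
by apply: leq_trans IH (mono _).
Qed.

Lemma unbounded_iff :
  (forall k, exists N, (k <= lev N)%N) <->
  (forall N, exists n, (N <= n)%N /\ lev n.+1 != lev n).
Proof.
split.
  move=> H N; apply: contrapT => Hn.
  have Hc : forall n, (N <= n)%N -> lev n = lev N.
    move=> n /subnK <-; elim: (n - N)%N => [|k IH]; first by rewrite add0n.
    apply/eqP; apply: contrapT => Hne; apply: Hn; exists (k + N)%N; split.
      exact: leq_addl.
    by rewrite -addSn IH; apply/negP => /eqP E; apply: Hne; rewrite E.
  have [M HM] := H (lev N).+1.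
  case: (leqP N M) => NM.
    by move: HM; rewrite (Hc _ NM) ltnn.
  have := lev_le (ltnW NM); lia.
move=> H; elim=> [|k [N HN]]; first by exists 0%N.
have [n [Nn Hn]] := H N; exists n.+1.
have := lev_le Nn; have := mono n; lia.
Qed.

Lemma bounded_not (j : nat) : (forall n, (lev n <= j)%N) ->
  ~ (forall k, exists N, (k <= lev N)%N).
Proof. move=> Hb H; have [N HN] := H j.+1; have := Hb N; lia. Qed.

End Seqlem.

Section Red.
Variable U : nat -> set cantor_space.

Definition good (x : cantor_space) n i :=
  cyl x n `<=` [set y | forall j, (j < i)%N -> U j y].

Definition lev x n := count (fun i => `[< good x n i.+1 >]) (iota 0 n).

Definition red x n := lev x n.+1 != lev x n.

Lemma cyl_sym x n y : cyl x n y -> cyl y n = cyl x n.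
Proof.
move=> Hy; apply/seteqP; split => z Hz m mn; first by rewrite Hz // Hy.
by rewrite Hz // Hy.
Qed.

Lemma lev_loc x n y : cyl x n y -> lev y n = lev x n.
Proof. by move=> Hy; rewrite /lev /good (cyl_sym Hy). Qed.

Lemma red_loc n : locdet (fun x => red x n).
Proof.
move=> x; exists n.+1 => y Hy; rewrite /red (lev_loc Hy).
by rewrite (lev_loc (cyl_sub (leqnSn n) Hy)).
Qed.

Lemma good_mono x n i : good x n i -> good x n.+1 i.
Proof. by move=> H y Hy; apply: H; exact (cyl_sub (leqnSn n) Hy). Qed.

Lemma lev_mono x n : (lev x n <= lev x n.+1)%N.
Proof.
rewrite /lev -addn1 iotaD count_cat add0n.
apply: leq_trans (leq_addr _ _).
apply: sub_count => i /asboolP H; apply/asboolP; rewrite addn1; exact (good_mono H).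
Qed.

Lemma count_iota_lb (a : pred nat) k N : (k <= N)%N ->
  (forall i, (i < k)%N -> a i) -> (k <= count a (iota 0 N))%N.
Proof.
move=> /subnK <- H; rewrite addnC iotaD count_cat add0n.
apply: leq_trans (leq_addr _ _).
have -> : count a (iota 0 k) = size (iota 0 k).
  apply/eqP; rewrite -all_count; apply/allP => i; rewrite mem_iota add0n.
  exact: H.
by rewrite size_iota.
Qed.

Lemma count_iota_ub (a : pred nat) j N :
  (forall i, a i -> (i < j)%N) -> (count a (iota 0 N) <= j)%N.
Proof.
move=> H; suff : (count a (iota 0 N) <= minn N j)%N.
  by move=> h; apply: leq_trans h (geq_minr _ _).
elim: N => [|N IH]; first by [].
rewrite -addn1 iotaD count_cat add0n /=.
case aN: (a N) => /=; last by move: IH; lia.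
by move: IH (H _ aN); lia.
Qed.

Lemma open_bigcap_lt (i : nat) : (forall j, open (U j)) ->
  open [set y | forall j, (j < i)%N -> U j y].
Proof.
move=> oU; elim: i => [|i IH].
  by rewrite (_ : [set y | _] = setT); [exact: openT|apply/seteqP; split => y //].
rewrite (_ : [set y | _] = [set y | forall j, (j < i)%N -> U j y] `&` U i).
  exact: openI.
apply/seteqP; split => y.
  by move=> H; split => [j ji|]; apply: H => //; exact: ltnW.
move=> [H1 H2] j; rewrite ltnS leq_eqVlt => /predU1P[->//|]; exact: H1.
Qed.

Lemma red_spec (oU : forall j, open (U j)) x :
  (forall j, U j x) <-> (forall N, exists n, (N <= n)%N /\ red x n).
Proof.
rewrite /red -(unbounded_iff (lev_mono x)); split.
  move=> Hx k.
  have /nbhs_cyl [n Hn] : nbhs x [set y | forall j, (j < k)%N -> U j y].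
    by apply: open_nbhs_nbhs; split; [exact: open_bigcap_lt|move=> j _; exact: Hx].
  exists (maxn n k); apply: count_iota_lb; first exact: leq_maxr.
  move=> i ik; apply/asboolP => y Hy j ji; apply: Hn; last by lia.
  exact (cyl_sub (leq_maxl n k) Hy).
move=> H j; apply: contrapT => Hj.
apply: (bounded_not (j := j) _ H) => n.
apply: count_iota_ub => i /asboolP Hg.
case: (ltnP i j) => // ji; exfalso; apply: Hj.
by apply: (Hg x) => //; lia.
Qed.

End Red.

Definition distinct_in {T} (A : set T) n (g : nat -> T) :=
  (forall i, (i < n)%N -> A (g i)) /\
  (forall i j, (i < n)%N -> (j < n)%N -> g i = g j -> i = j).

Lemma infinite_distinct T (A : set T) :
  infinite_set A <-> forall n, exists g : nat -> T, distinct_in A n g.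
Proof.
split.
  move=> Ainf; elim=> [|n [g [gA ginj]]].
    have [a _] := infinite_setN0 Ainf.
    by exists (fun _ => a); split => [i|i j]; rewrite ltn0.
  have fB : finite_set (g @` `I_n) by apply: finite_image.
  have [a [Aa Ba]] := infinite_setN0 (infinite_setD Ainf fB).
  exists (fun i => if i == n then a else g i); split.
    move=> i; rewrite ltnS leq_eqVlt => /predU1P[->|lt]; first by rewrite eqxx.
    by rewrite (ltn_eqF lt); exact: gA.
  move=> i j; rewrite !ltnS => Hi Hj.
  move: Hi; rewrite leq_eqVlt => /predU1P[->|ilt];
    move: Hj; rewrite leq_eqVlt => /predU1P[->|jlt];
    rewrite ?eqxx ?(ltn_eqF ilt) ?(ltn_eqF jlt) //.
  - by move=> E; exfalso; apply: Ba; exists j => //; rewrite E.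
  - by move=> E; exfalso; apply: Ba; exists i.
  - exact: ginj.
move=> H [m Am].
have [g [gA ginj]] := H m.+1.
have inj : {in `I_m.+1 &, injective g}.
  by move=> i j; rewrite !in_setE /= => iI jI; exact: ginj.
have le1 : g @` `I_m.+1 #<= A.
  by apply: subset_card_le => _ [i iI <-]; exact: gA.
have le2 : `I_m.+1 #<= A by rewrite -(card_le_eql (inj_card_eq inj)).
have : `I_m.+1 #<= `I_m by rewrite -(card_le_eqr Am).
by rewrite card_le_II ltnn.
Qed.

Lemma nat_infinite (A : set nat) :
  infinite_set A <-> forall N, exists n, (N <= n)%N /\ A n.
Proof.
split.
  move=> Ainf N.
  have [a [Aa Na]] := infinite_setN0 (infinite_setD Ainf (finite_II N)).
  exists a; split => //; rewrite leqNgt; apply/negP => aN; exact: Na.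
move=> H; have [c Hc] := choice H.
pose fix g i := if i is i'.+1 then c (g i').+1 else c 0%N.
have gS i : (g i < g i.+1)%N by have [] := Hc (g i).+1.
have gmono i j : (i < j)%N -> (g i < g j)%N.
  move=> /subnK <-; elim: (j - i.+1)%N => [|k IH]; first by rewrite add0n.
  by apply: ltn_trans IH (gS _).
apply/infinite_distinct => n; exists g; split.
  by case=> [|i] _ /=; [have [] := Hc 0%N|have [] := Hc (g i).+1].
move=> i j _ _ E; case: (ltngtP i j) => // ij.
  by have := gmono _ _ ij; rewrite E ltnn.
by have := gmono _ _ ij; rewrite E ltnn.
Qed.

Lemma count_inf_bij (M : Type) (h : nat -> M) (A : set M) :
  bijective h -> infinite_set A ->
  exists f : M -> nat, (forall x y, A x -> A y -> f x = f y -> x = y) /\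
    (forall n, exists x, A x /\ f x = n).
Proof.
move=> [g hg gh] Ainf.
have cA : countable A.
  apply/pcard_injP; exists g => x y _ _ E.
  by rewrite -(gh x) -(gh y) E.
have /card_set_bijP [f [_ finj fsurj]] := eq_card_nat cA Ainf.
exists f; split.
  by move=> x y Ax Ay; apply: finj; rewrite in_setE.
by move=> n; have [x Ax fx] := fsurj n I; exists x.
Qed.

Section Fol.
Variable L : vocab.

Definition FTrue : formula L := FImp FFalse FFalse.
Definition bigAnd (s : seq nat) (f : nat -> formula L) :=
  foldr (fun i acc => FAnd (f i) acc) FTrue s.

Lemma sat_bigAnd (M : structure L) (e : nat -> M) s f :
  sat e (bigAnd s f) <-> forall i, i \in s -> sat e (f i).
Proof.
elim: s => [|i s IH] /=; first by split => // _ [].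
rewrite IH; split.
  by move=> [H1 H2] j; rewrite inE => /predU1P[->//|]; exact: H2.
by move=> H; split => [|j js]; apply: H; rewrite inE ?eqxx ?js ?orbT.
Qed.

Lemma free_bigAnd s f x : free (bigAnd s f) x -> exists2 i, i \in s & free (f i) x.
Proof.
elim: s => [|i s IH] /=; first by case.
case=> [H|/IH [j js H]]; first by exists i; rewrite ?inE ?eqxx.
by exists j; rewrite ?inE ?js ?orbT.
Qed.

Lemma qfree_bigAnd s f : (forall i, qfree (f i)) -> qfree (bigAnd s f).
Proof. by move=> H; elim: s => [|i s IH] //=. Qed.

Definition ovr {M : Type} (e : nat -> M) (xs : seq nat) (g : nat -> M) :=
  fun v => if v \in xs then g v else e v.

Lemma ovr_nil {M : Type} (e g : nat -> M) : ovr e [::] g = e.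
Proof. by []. Qed.

Lemma ovr_cons1 {M : Type} (e g : nat -> M) x xs :
  ovr (upd e x (g x)) xs g = ovr e (x :: xs) g.
Proof.
apply: funext => v; rewrite /ovr /upd inE.
case: (v \in xs); first by rewrite orbT.
by case: eqP => [->|]; rewrite ?eqxx.
Qed.

Lemma ovr_cons2 {M : Type} (e g : nat -> M) x xs a :
  ovr (upd e x a) xs g = ovr e (x :: xs) (fun v => if v \in xs then g v else a).
Proof.
apply: funext => v; rewrite /ovr /upd inE.
case vxs: (v \in xs); first by rewrite orbT.
by case: eqP => [->|]; rewrite ?eqxx.
Qed.

Lemma sat_exs (M : structure L) (e : nat -> M) psi xs :
  sat e (foldr (@FEx L) psi xs) <-> exists g : nat -> M, sat (ovr e xs g) psi.
Proof.
elim: xs e => [|x xs IH] e /=; first by split => [H|[g]//]; exists e.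
split.
  move=> [a /(IH _) [g Hg]]; exists (fun v => if v \in xs then g v else a).
  by rewrite -ovr_cons2.
move=> [g Hg]; exists (g x); apply/(IH _); exists g; by rewrite ovr_cons1.
Qed.

Lemma sat_alls (M : structure L) (e : nat -> M) psi xs :
  sat e (foldr (@FAll L) psi xs) <-> forall g : nat -> M, sat (ovr e xs g) psi.
Proof.
elim: xs e => [|x xs IH] e /=; first by split => [H g|H] //; exact: (H e).
split.
  by move=> H g; rewrite -ovr_cons1; exact: (proj1 (IH _) (H (g x)) g).
move=> H a; apply/(IH _) => g; rewrite ovr_cons2; exact: H.
Qed.

Lemma free_exs psi xs x : free (foldr (@FEx L) psi xs) x -> x \notin xs /\ free psi x.
Proof.
elim: xs => [|y xs IH] //= [xy /IH [H1 H2]]; split => //.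
by rewrite inE negb_or H1 andbT; apply/eqP.
Qed.

Lemma free_alls psi xs x : free (foldr (@FAll L) psi xs) x -> x \notin xs /\ free psi x.
Proof.
elim: xs => [|y xs IH] //= [xy /IH [H1 H2]]; split => //.
by rewrite inE negb_or H1 andbT; apply/eqP.
Qed.

Lemma models_Th (K : structure L -> Prop) (S : theory L) :
  (forall phi, S phi -> sentence phi /\ forall M : structure L, K M -> forall e, @sat L M e phi) ->
  (forall M : structure L, (nat -> M) -> models M S -> K M) ->
  forall M : structure L, models M S <-> models M (Th K).
Proof.
move=> H1 H2 M; split.
  move=> MS phi [_ Hphi] e; apply: (Hphi M _ phi erefl e).
  exact: H2 e MS.
move=> MT phi Sphi e; have [sphi Hv] := H1 phi Sphi.
apply: (MT phi _ e); split => // N KN psi -> e'; exact: Hv.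
Qed.

Lemma Th_sentence (K : structure L -> Prop) phi : Th K phi -> sentence phi.
Proof. by case. Qed.

Lemma bij_of {A B : Type} (f : A -> B) :
  injective f -> (forall y, exists x, f x = y) -> bijective f.
Proof.
move=> finj fs; have [g Hg] := choice fs.
by exists g => [x|y]; [apply: finj; rewrite Hg|exact: Hg].
Qed.

Lemma iso_sym (M N : structure L) : isomorphic M N -> isomorphic N M.
Proof.
move=> [h [[g hg gh] Hr]]; exists g; split; first by exists h.
move=> s a; rewrite (Hr s (g \o a)).
by have -> : h \o (g \o a) = a by apply: funext => i /=; rewrite gh.
Qed.

Lemma iso_trans (M N P : structure L) :
  isomorphic M N -> isomorphic N P -> isomorphic M P.
Proof.
move=> [h [hb Hh]] [k [kb Hk]]; exists (k \o h); split.
  exact: bij_comp.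
by move=> s a; rewrite Hh Hk.
Qed.

End Fol.

Lemma memI i n : (i \in iota 0 n) = (i < n)%N.
Proof. by rewrite mem_iota. Qed.

Lemma ovrE {M : Type} (e g : nat -> M) xs v : v \in xs -> ovr e xs g v = g v.
Proof. by rewrite /ovr => ->. Qed.

Definition Prel (x : nat) : formula L1 := @FRel L1 tt (fun _ => x).
Definition lit (b : bool) x : formula L1 := if b then Prel x else FNot (Prel x).
Definition dist {L} n : formula L :=
  bigAnd (iota 0 n) (fun i => bigAnd (iota 0 i) (fun j => FNot (@FEq L j i))).
Definition psi1 b n := FAnd (bigAnd (iota 0 n) (lit b)) (dist n).
Definition phi1 b n := foldr (@FEx L1) (psi1 b n) (iota 0 n).
Definition S1 : theory L1 := [set phi | exists b n, phi = phi1 b n].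

Definition setb (M : structure L1) (b : bool) : set M :=
  [set m | if b then P1 m else ~ P1 m].
Arguments setb : clear implicits.

Lemma sat_dist {L} (M : structure L) (e : nat -> M) n :
  sat e (dist n) <-> forall i j, (i < n)%N -> (j < n)%N -> e i = e j -> i = j.
Proof.
rewrite /dist sat_bigAnd; split.
  move=> H i j iN jN E; case: (ltngtP i j) => // ij.
  - have := H j; rewrite memI => /(_ jN) /sat_bigAnd /(_ i).
    by rewrite memI => /(_ ij).
  - have := H i; rewrite memI => /(_ iN) /sat_bigAnd /(_ j).
    by rewrite memI => /(_ ij) /=; rewrite E.
move=> H i; rewrite memI => iN; apply/sat_bigAnd => j.
rewrite memI => ji /= E.
by have := H _ _ (ltn_trans ji iN) iN E; move=> jiE; rewrite jiE ltnn in ji.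
Qed.

Lemma free_dist {L} n x : free (@dist L n) x -> (x < n)%N.
Proof.
move=> /free_bigAnd [i]; rewrite memI => iN /free_bigAnd [j].
by rewrite memI => ji /= [->|->] //; exact: ltn_trans ji iN.
Qed.

Lemma sat_phi1 (M : structure L1) (e : nat -> M) b n :
  sat e (phi1 b n) <-> exists g, distinct_in (setb M b) n g.
Proof.
rewrite /phi1 sat_exs; split.
  move=> [g [/sat_bigAnd H1 /sat_dist H2]]; exists (ovr e (iota 0 n) g); split => //.
  move=> i iN; have := H1 i; rewrite memI => /(_ iN).
  by rewrite /setb; case: b {H1}.
move=> [g [H1 H2]]; exists g; split.
  apply/sat_bigAnd => i; rewrite memI => iN; have := H1 i iN.
  by case: b {H1} => /=; rewrite /ovr memI iN.
apply/(sat_dist (ovr e (iota 0 n) g)) => i j iN jN; rewrite /ovr !memI iN jN.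
exact: H2.
Qed.

Lemma S1_ok phi : S1 phi -> sentence phi /\ Ek 1 phi.
Proof.
move=> [b [n ->]]; split.
  move=> x /free_exs [+ /= []]; rewrite memI => xn.
    move=> /free_bigAnd [i]; rewrite memI => iN.
    by rewrite /lit; case: b => /= [][k] /= E; rewrite -E iN in xn.
  by move=> H; have := free_dist H; rewrite (negbTE xn).
exists (iota 0 n), (psi1 b n); split => //=; split.
  by apply: qfree_bigAnd => i; case: b.
by apply: qfree_bigAnd => i; apply: qfree_bigAnd.
Qed.

Lemma K1_iff (M : structure L1) :
  K1 M <-> forall b, infinite_set (setb M b).
Proof.
split; first by move=> [H1 H2] [].
by move=> H; split; [exact: (H true)|exact: (H false)].
Qed.

Lemma models_S1 (M : structure L1) : (nat -> M) -> (models M S1 <-> K1 M).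
Proof.
move=> e; rewrite K1_iff; split.
  move=> MS b; apply/infinite_distinct => n.
  by apply/(sat_phi1 e); apply: MS; exists b, n.
move=> H phi [b [n ->]] e'; apply/sat_phi1.
by have /infinite_distinct := H b; apply.
Qed.

Lemma T1_models_iff : forall M : structure L1, models M S1 <-> models M T1.
Proof.
apply: models_Th.
  move=> phi Sphi; split; first by case: (S1_ok Sphi).
  by move=> M KM e; exact: (proj2 (models_S1 e) KM phi Sphi e).
by move=> M e /(models_S1 e).
Qed.

Lemma T1_K1 (M : structure L1) : (nat -> M) -> (models M T1 <-> K1 M).
Proof. by move=> e; rewrite -T1_models_iff; exact: models_S1. Qed.

Definition C1 : structure L1 := @Structure L1 nat (fun s a => ~~ odd (a ord0)).

Lemma K1_C1 : K1 C1.
Proof.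
apply/K1_iff => b; apply/nat_infinite => N.
case: b; [exists N.*2|exists N.*2.+1]; rewrite /setb /P1 /=.
  by rewrite odd_double -addnn leq_addr.
by rewrite odd_double -addnn; split => //; apply: leq_trans (leq_addr _ _) (leqnSn _).
Qed.

Lemma rel1E (M : structure L1) (a : 'I_1 -> M) : @Defs.rel L1 M tt a <-> P1 (a ord0).
Proof.
rewrite /P1; have -> // : a = (fun _ => a ord0).
by apply: funext => i; rewrite (ord1 i).
Qed.

Lemma iso_C1 (M : structure L1) : countably_infinite M -> K1 M -> isomorphic M C1.
Proof.
move=> [h hb] /K1_iff HK.
have [fA [fAi fAs]] := count_inf_bij hb (HK true).
have [fB [fBi fBs]] := count_inf_bij hb (HK false).
pose Phi (x : M) := if `[< P1 x >] then (fA x).*2 else (fB x).*2.+1.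
have PhiE x : ~~ odd (Phi x) = `[< P1 x >].
  by rewrite /Phi; case: asboolP => _; rewrite /= odd_double.
exists Phi; split.
  apply: bij_of.
    move=> x y; rewrite /Phi; case: (asboolP (P1 x)) => Px; case: (asboolP (P1 y)) => Py.
    - by move=> /double_inj; apply: fAi.
    - by move/(congr1 odd); rewrite /= !odd_double.
    - by move/(congr1 odd); rewrite /= !odd_double.
    - by move=> [] /double_inj; apply: fBi.
  move=> n; case On: (odd n).
    have [x [Bx fx]] := fBs n./2; exists x; rewrite /Phi.
    case: asboolP => // _; rewrite fx -[RHS](odd_double_half n) On; lia.
  have [x [Ax fx]] := fAs n./2; exists x; rewrite /Phi.
  case: asboolP => // _; rewrite fx -[RHS](odd_double_half n) On; lia.
case=> a; rewrite rel1E /= PhiE.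
by split => [H|/asboolP //]; apply/asboolP.
Qed.

Lemma T1_categorical : aleph0_categorical T1.
Proof.
split.
  exists C1; split; first by exists id; exists id.
  by apply/(@T1_K1 C1 id); exact: K1_C1.
move=> M N cM cN MT NT.
have [hM _] := cM; have [hN _] := cN.
apply: iso_trans (iso_C1 cM (proj1 (T1_K1 hM) MT)) (iso_sym (iso_C1 cN (proj1 (T1_K1 hN) NT))).
Qed.

Definition c1 (m : nat) : diag_index L1 := existT _ tt (fun _ => m).

Definition O1 (i : nat) : set (ModSpace L1) :=
  [set x | (exists m, (i <= m)%N /\ x (c1 m) = true) /\
           (exists m, (i <= m)%N /\ ~ x (c1 m) = true)].

Lemma Mod_T1E : Mod T1 = \bigcap_i O1 i.
Proof.
apply/seteqP; split => x.
  move=> /(@T1_K1 (struct_of_diag x) id) /K1_iff H i _; split.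
    by have /nat_infinite := H true; apply.
  by have /nat_infinite := H false; apply.
move=> H; apply/(@T1_K1 (struct_of_diag x) id)/K1_iff => b; apply/nat_infinite => N.
by have [H1 H2] := H N I; case: b.
Qed.

Lemma Pi0_Mod_T1 : Pi0 2 (Mod T1).
Proof.
exists (fun i => ~` O1 i); split.
  move=> i; rewrite setCK; apply: open_loc => x [[m1 [i1 E1]] [m2 [i2 E2]]].
  exists [:: c1 m1; c1 m2] => y Hy; split.
    exists m1; split; first by []. by rewrite Hy //=; left.
  exists m2; split; first by []. by rewrite Hy //=; right; left.
by rewrite Mod_T1E setC_bigcap.
Qed.

Section Red1.
Variable U : nat -> set cantor_space.
Hypothesis oU : forall j, open (U j).

Definition f1 (x : cantor_space) : ModSpace L1 :=
  fun d => if odd (projT2 d ord0) then false else red U x (projT2 d ord0)./2.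

Lemma f1_cont : continuous f1.
Proof.
apply: cont_into => d; rewrite /f1.
case: (odd (projT2 d ord0)); first by move=> x; exists 0%N.
exact: red_loc.
Qed.

Lemma f1_spec x : (forall j, U j x) <-> Mod T1 (f1 x).
Proof.
rewrite (red_spec oU) /Mod /=; rewrite (T1_K1 (M := struct_of_diag (f1 x)) id).
rewrite K1_iff; split.
  move=> H b; apply/nat_infinite => N; case: b.
    have [n [Nn Hn]] := H N; exists n.*2; split.
      by rewrite -addnn; apply: leq_trans Nn (leq_addr _ _).
    by rewrite /setb /P1 /= /f1 /= odd_double doubleK.
  exists N.*2.+1; split.
    by rewrite -addnn; apply: leq_trans (leq_addr _ _) (leqnSn _).
  by rewrite /setb /P1 /= /f1 /= odd_double.
move=> H N; have /nat_infinite := H true => /(_ N.*2) [m [Nm]].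
rewrite /setb /P1 /= /f1 /=; case Om: (odd m) => // Hm.
exists m./2; split => //; rewrite -leq_double even_halfK ?Om //.

Qed.

End Red1.

Lemma Pi0_complete_T1 : Pi0_complete 2 (Mod T1).
Proof.
split; first exact: Pi0_Mod_T1.
move=> B [F [oF EF]].
have oU : forall j, open (~` F j) by exact: oF.
exists (f1 (fun j => ~` F j)); split; first exact: f1_cont.
apply/seteqP; split => x.
  move=> Bx; apply/f1_spec => // j Fj; have : (~` B) x by rewrite EF; exists j.
  by [].
move=> /(f1_spec oU) H; apply: contrapT => nB.
have : (~` B) x by [].
by rewrite EF => -[j _ Fj]; exact: H j Fj.
Qed.

Lemma T1_Ek : Ek_axiomatizable 1 T1.
Proof. exists S1; split; [exact: S1_ok|exact: T1_models_iff]. Qed.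

Definition Rf (x y : nat) : formula L2 :=
  @FRel L2 tt (fun i : 'I_2 => if val i == 0%N then x else y).

Arguments Rf : simpl never.

Lemma satR (M : structure L2) (e : nat -> M) x y : sat e (Rf x y) <-> R2 (e x) (e y).
Proof.
rewrite /= /R2.
have -> // : (fun i : 'I_2 => e (if val i == 0%N then x else y)) =
  (fun i : 'I_2 => if val i == 0%N then e x else e y).
by apply: funext => i; case: (val i == 0%N).
Qed.

Lemma relR (M : structure L2) (e : nat -> M) x y :
  @Defs.rel L2 M tt (fun i : 'I_2 => e (if val i == 0%N then x else y)) <-> R2 (e x) (e y).
Proof. exact: satR. Qed.

Lemma freeR x y v : free (Rf x y) v -> v = x \/ v = y.
Proof. by move=> [k]; case: (val k == 0%N) => <-; [left|right]. Qed.

Definition ax_irr : formula L2 := FAll 0 (FNot (Rf 0 0)).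
Definition ax_sym : formula L2 := FAll 0 (FAll 1 (FImp (Rf 0 1) (Rf 1 0))).
Definition ax_fun : formula L2 :=
  FAll 0 (FAll 1 (FAll 2 (FImp (Rf 0 1) (FImp (Rf 0 2) (@FEq L2 1 2))))).
Definition body_m n : formula L2 :=
  FAnd (dist n) (bigAnd (iota 0 n) (fun i => Rf i (n + i))).
Definition ax_m n := foldr (@FEx L2) (body_m n) (iota 0 (n + n)).
Definition body_u n : formula L2 :=
  FAnd (dist n) (bigAnd (iota 0 n) (fun i => FNot (Rf i n))).
Definition ax_u n := foldr (@FEx L2) (FAll n (body_u n)) (iota 0 n).

Definition S2 : theory L2 := [set phi | phi = ax_irr \/ phi = ax_sym \/ phi = ax_fun \/
  (exists n, phi = ax_m n) \/ (exists n, phi = ax_u n)].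

Definition matched (M : structure L2) : set M := [set x | exists y, R2 x y].
Definition unmatched (M : structure L2) : set M := [set x | ~ exists y, R2 x y].
Arguments matched : clear implicits.
Arguments unmatched : clear implicits.

Lemma S2_ok phi : S2 phi -> sentence phi /\ Ek 2 phi.
Proof.
move=> [->|[->|[->|[[n ->]|[n ->]]]]].
- split; first by move=> x /= [x0 /freeR [] E]; lia.
  by exists [::], ax_irr; split => //; exists [:: 0%N], (FNot (Rf 0 0)).
- split; first by move=> x /= [x0 [x1 [/freeR [] E|/freeR [] E]]]; lia.
  by exists [::], ax_sym; split => //; exists [:: 0%N; 1%N], (FImp (Rf 0 1) (Rf 1 0)).
- split; first by move=> x /= [x0 [x1 [x2 [/freeR [] E|[/freeR [] E|[] E]]]]]; lia.
  exists [::], ax_fun; split => //.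
  by exists [:: 0%N; 1%N; 2%N], (FImp (Rf 0 1) (FImp (Rf 0 2) (@FEq L2 1 2))).
- split.
    move=> x /free_exs []; rewrite memI => xn /= [H|H]; first by have := free_dist H; lia.
    move: H => /free_bigAnd [i]; rewrite memI => iN /freeR [] E; lia.
  exists (iota 0 (n + n)), (body_m n); split => //.
  exists [::], (body_m n); split => //; split.
    by apply: qfree_bigAnd => i; apply: qfree_bigAnd.
  by apply: qfree_bigAnd.
- split.
    move=> x /free_exs []; rewrite memI => xn /= [xnn [H|H]]; first by have := free_dist H; lia.
    move: H => /free_bigAnd [i]; rewrite memI => iN /freeR [] E; lia.
  exists (iota 0 n), (FAll n (body_u n)); split => //.
  exists [:: n], (body_u n); split => //; split.
    by apply: qfree_bigAnd => i; apply: qfree_bigAnd.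
  by apply: qfree_bigAnd.
Qed.

Section Sem.
Variable M : structure L2.

Lemma sat_irr (e : nat -> M) : sat e ax_irr <-> forall a : M, ~ R2 a a.
Proof. by split => H a; have /= := H a; rewrite relR. Qed.

Lemma sat_sym (e : nat -> M) : sat e ax_sym <-> forall a b : M, R2 a b -> R2 b a.
Proof. by split => H a b; have /= := H a b; rewrite !relR. Qed.

Lemma sat_fun (e : nat -> M) :
  sat e ax_fun <-> forall a b c : M, R2 a b -> R2 a c -> b = c.
Proof. by split => H a b c; have /= := H a b c; rewrite !relR. Qed.

Lemma sat_m (e : nat -> M) n : sat e (ax_m n) <->
  exists g : nat -> M, (forall i j, (i < n)%N -> (j < n)%N -> g i = g j -> i = j) /\
    (forall i, (i < n)%N -> R2 (g i) (g (n + i))).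
Proof.
rewrite /ax_m sat_exs; split.
  move=> [G [/sat_dist Hd /sat_bigAnd Hb]]; exists (ovr e (iota 0 (n + n)) G).
  split => // i iN; have := Hb i; rewrite memI => /(_ iN) /satR; done.
move=> [g [Hd Hb]]; exists g; split.
  apply/sat_dist => i j iN jN; rewrite !ovrE ?memI; [exact: Hd|lia|lia].
apply/sat_bigAnd => i; rewrite memI => iN; rewrite satR !ovrE ?memI; [exact: Hb|lia|lia].
Qed.

Lemma sat_u (e : nat -> M) n : sat e (ax_u n) <->
  exists g : nat -> M, forall a : M,
    (forall i j, (i < n)%N -> (j < n)%N -> g i = g j -> i = j) /\
    (forall i, (i < n)%N -> ~ R2 (g i) a).
Proof.
have E g a i : (i < n)%N -> upd (ovr e (iota 0 n) g) n a i = g i.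
  by move=> iN; rewrite /upd (ltn_eqF iN) ovrE ?memI.
rewrite /ax_u sat_exs; split.
  move=> [G HG]; exists G => a; have [/sat_dist Hd /sat_bigAnd Hb] := HG a.
  split.
    by move=> i j iN jN; rewrite -(E G a i iN) -(E G a j jN); exact: Hd.
  move=> i iN; have := Hb i; rewrite memI => /(_ iN) /=; rewrite relR E //.
  by rewrite /upd eqxx.
move=> [g Hg]; exists g => a; have [Hd Hb] := Hg a; split.
  by apply/sat_dist => i j iN jN; rewrite (E g a i iN) (E g a j jN); exact: Hd.
apply/sat_bigAnd => i; rewrite memI => iN /=; rewrite relR E //.
by rewrite /upd eqxx; exact: Hb.
Qed.

Lemma models_S2 (e : nat -> M) : models M S2 <-> K2 M.
Proof.
split.
  move=> MS; split.
  - by apply/(sat_irr e); apply: MS; left.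
  - by apply/(sat_sym e); apply: MS; right; left.
  - by apply/(sat_fun e); apply: MS; right; right; left.
  - apply/infinite_distinct => n.
    have /sat_m [g [Hd Hb]] : sat e (ax_m n) by apply: MS; right; right; right; left; exists n.
    by exists g; split => // i iN; exists (g (n + i)); exact: Hb.
  - apply/infinite_distinct => n.
    have /sat_u [g Hg] : sat e (ax_u n) by apply: MS; right; right; right; right; exists n.
    exists g; split; first by move=> i iN [y Hy]; exact: (proj2 (Hg y) i iN).
    exact: (proj1 (Hg (e 0%N))).
move=> [Hirr Hsym Hfun Hm Hu] phi [->|[->|[->|[[n ->]|[n ->]]]]] e'.
- by apply/sat_irr.
- by apply/sat_sym.
- by apply/sat_fun.
- have [g [gA gD]] := proj1 (infinite_distinct _) Hm n.
  have [p Hp] : exists p : nat -> M, forall i, (i < n)%N -> R2 (g i) (p i).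
    have H : forall i, exists y, (i < n)%N -> R2 (g i) y.
      move=> i; case: (ltnP i n) => iN; last by exists (e 0%N).
      by have [y Hy] := gA i iN; exists y.
    by have [p Hp] := choice H; exists p.
  apply/sat_m; exists (fun v => if (v < n)%N then g v else p (v - n)%N); split.
    by move=> i j iN jN; rewrite iN jN; exact: gD.
  move=> i iN; rewrite iN ifF; last by lia.
  by rewrite addKn; exact: Hp.
- have [g [gA gD]] := proj1 (infinite_distinct _) Hu n.
  apply/sat_u; exists g => a; split => // i iN Hr; apply: (gA i iN); by exists a.
Qed.

End Sem.

Lemma T2_models_iff : forall M : structure L2, models M S2 <-> models M T2.
Proof.
apply: models_Th.
  move=> phi Sphi; split; first by case: (S2_ok Sphi).
  by move=> M KM e; exact: (proj2 (models_S2 e) KM phi Sphi e).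
by move=> M e /(models_S2 e).
Qed.

Lemma T2_K2 (M : structure L2) : (nat -> M) -> (models M T2 <-> K2 M).
Proof. by move=> e; rewrite -T2_models_iff; exact: models_S2. Qed.

Lemma T2_Ek : Ek_axiomatizable 2 T2.
Proof. exists S2; split; [exact: S2_ok|exact: T2_models_iff]. Qed.

Definition Rc (a b : nat) : bool :=
  ((a %% 3 == 1) && (b == a.+1)) || ((a %% 3 == 2) && (b.+1 == a)).

Definition C2 : structure L2 := @Structure L2 nat (fun s a => Rc (a ord0) (a ord_max)).

Lemma R2C2 x y : @R2 C2 x y <-> Rc x y.
Proof. by []. Qed.

Lemma rel2E (M : structure L2) (a : 'I_2 -> M) :
  @Defs.rel L2 M tt a <-> R2 (a ord0) (a ord_max).
Proof.
rewrite /R2; have -> // : a = (fun i : 'I_2 => if val i == 0%N then a ord0 else a ord_max).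
apply: funext => -[[|[|k]] Hk] /=.
- by congr a; apply: val_inj.
- by congr a; apply: val_inj.
- by [].
Qed.

Lemma K2_C2 : K2 C2.
Proof.
split.
- move=> x; rewrite R2C2 /Rc; apply/negP; lia.
- move=> x y; rewrite !R2C2 /Rc; lia.
- move=> x y z; rewrite !R2C2 /Rc; lia.
- apply/nat_infinite => N; exists (3 * N).+1; split; first by lia.
  by exists (3 * N).+2; rewrite R2C2 /Rc; lia.
- apply/nat_infinite => N; exists (3 * N); split; first by lia.
  move=> [y]; rewrite R2C2 /Rc; lia.
Qed.

Lemma iso_C2 (M : structure L2) : countably_infinite M -> K2 M -> isomorphic M C2.
Proof.
move=> [h hb] [Hirr Hsym Hfun Hm Hu].
case: (hb) => hinv hK hinvK.
have hinv_inj : injective hinv := can_inj hinvK.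
have Hs : forall x : M, exists y, (exists z, R2 x z) -> R2 x y.
  move=> x; case: (pselect (exists z, R2 x z)) => [[z Hz]|nz].
    by exists z.
  by exists x => H; exfalso; exact: nz.
have [sig Hsig] := choice Hs.
have sigE x y : R2 x y -> sig x = y.
  by move=> H; exact: Hfun _ _ _ (Hsig x (ex_intro _ y H)) H.
have sigsig x : matched M x -> sig (sig x) = x.
  by move=> mx; apply: sigE; apply: Hsym; exact: Hsig.
have msig x : matched M x -> matched M (sig x).
  by move=> mx; exists x; apply: Hsym; exact: Hsig.
have hneq x : matched M x -> hinv x <> hinv (sig x).
  move=> mx /hinv_inj E; apply: (Hirr x); rewrite {2}E; exact: Hsig.
pose Rep := [set x | matched M x /\ (hinv x < hinv (sig x))%N].
have repS x : matched M x -> ~ Rep x -> Rep (sig x).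
  move=> mx nR; split; first exact: msig.
  rewrite sigsig //; have := hneq x mx.
  case: (ltngtP (hinv x) (hinv (sig x))) => // lt _; exfalso; exact: nR.
have repN x : Rep x -> ~ Rep (sig x).
  move=> [mx lt] [_]; rewrite sigsig //; move: lt; lia.
have Repinf : infinite_set Rep.
  move=> fR; apply: Hm.
  apply: (@sub_finite_set _ _ (Rep `|` sig @` Rep)); last first.
    by rewrite finite_setU; split => //; exact: finite_image.
  move=> x mx; case: (pselect (Rep x)) => Rx; first by left.
  by right; exists (sig x); [exact: repS|exact: sigsig].
have [fU [fUi fUs]] := count_inf_bij hb Hu.
have [fR [fRi fRs]] := count_inf_bij hb Repinf.
pose Phi x := if `[< matched M x >] then
  (if `[< Rep x >] then 3 * fR x + 1 else 3 * fR (sig x) + 2)%N else (3 * fU x)%N.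
have PhiC x : [\/ unmatched M x /\ Phi x = (3 * fU x)%N,
    Rep x /\ Phi x = (3 * fR x + 1)%N |
    [/\ matched M x, ~ Rep x & Phi x = (3 * fR (sig x) + 2)%N]].
  rewrite /Phi; case: asboolP => mx; last by constructor 1.
  by case: asboolP => Rx; [constructor 2|constructor 3].
have PhiU x : unmatched M x -> Phi x = (3 * fU x)%N.
  by move=> ux; case: (PhiC x) => [[]|[[mx _]]|[mx]] //; exfalso; exact: ux.
have PhiR x : Rep x -> Phi x = (3 * fR x + 1)%N.
  by move=> rx; case: (PhiC x) => [[ux]|[]|[]] //; exfalso; exact: ux (proj1 rx).
have PhiS x : matched M x -> ~ Rep x -> Phi x = (3 * fR (sig x) + 2)%N.
  by move=> mx nR; case: (PhiC x) => [[ux]|[]|[]] //; exfalso; exact: ux.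
exists Phi; split.
  apply: bij_of.
    move=> x y E; case: (PhiC x) => [[ux Ex]|[rx Ex]|[mx nrx Ex]];
      case: (PhiC y) => [[uy Ey]|[ry Ey]|[my nry Ey]]; rewrite Ex Ey in E; try lia.
    - by apply: fUi => //; lia.
    - by apply: fRi => //; lia.
    - rewrite -(sigsig x mx) -(sigsig y my); congr sig.
      by apply: fRi; [exact: repS|exact: repS|lia].
  move=> n; have := divn_eq n 3; have := ltn_pmod n (isT : (0 < 3)%N).
  case E: (n %% 3)%N => [|[|[|r]]] // _ En.
  - have [x [ux fx]] := fUs (n %/ 3)%N; exists x; rewrite PhiU // fx; lia.
  - have [x [rx fx]] := fRs (n %/ 3)%N; exists x; rewrite PhiR // fx; lia.
  - have [x [rx fx]] := fRs (n %/ 3)%N; exists (sig x).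
    rewrite PhiS ?sigsig ?fx; first lia.
    + exact: proj1 rx.
    + exact: msig (proj1 rx).
    + exact: repN.
case=> a; rewrite rel2E; set x := a ord0; set y := a ord_max.
change (R2 x y <-> Rc (Phi x) (Phi y)); split.
  move=> Hxy; have mx : matched M x by exists y.
  have sx : sig x = y by exact: sigE.
  case: (pselect (Rep x)) => rx.
    have nry : ~ Rep y by rewrite -sx; exact: repN.
    rewrite (PhiR _ rx) (PhiS _ _ nry); last by rewrite -sx; exact: msig.
    rewrite -sx sigsig // /Rc; lia.
  have ry : Rep y by rewrite -sx; exact: repS.
  rewrite (PhiR _ ry) (PhiS _ _ rx) // sx /Rc; lia.
case: (PhiC x) => [[ux Ex]|[rx Ex]|[mx nrx Ex]];
  case: (PhiC y) => [[uy Ey]|[ry Ey]|[my nry Ey]]; rewrite Ex Ey /Rc; try lia.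
- move=> H; have E : sig y = x by apply: fRi; [exact: repS|exact: rx|lia].
  by apply: Hsym; rewrite -E; exact: Hsig.
- move=> H; have E : y = sig x by apply: fRi; [exact: ry|exact: repS|lia].
  by rewrite E; exact: Hsig.
Qed.

Lemma T2_categorical : aleph0_categorical T2.
Proof.
split.
  exists C2; split; first by exists id; exists id.
  by apply/(@T2_K2 C2 id); exact: K2_C2.
move=> M N cM cN MT NT.
have [hM _] := cM; have [hN _] := cN.
apply: iso_trans (iso_C2 cM (proj1 (T2_K2 hM) MT)) (iso_sym (iso_C2 cN (proj1 (T2_K2 hN) NT))).
Qed.

Lemma pairing_ex : exists pu : (nat * nat -> nat) * (nat -> nat * nat),
  cancel pu.1 pu.2 /\ cancel pu.2 pu.1.
Proof.
have /card_set_bijP [f [_ finj fsurj]] := card_nat2.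
have fb : bijective f.
  apply: bij_of; first by move=> x y; apply: finj; rewrite in_setE.
  by move=> y; have [x _ <-] := fsurj y I; exists x.
by case: fb => g fg gf; exists (f, g).
Qed.

Definition pu := projT1 (cid pairing_ex).
Definition pr := pu.1.
Definition unp := pu.2.
Lemma prK : cancel pr unp. Proof. exact: (proj1 (projT2 (cid pairing_ex))). Qed.
Lemma unpK : cancel unp pr. Proof. exact: (proj2 (projT2 (cid pairing_ex))). Qed.

Inductive el := An of nat | Pa of nat & nat & bool.

Definition enc (v : el) : nat :=
  match v with
  | An a => a.*2
  | Pa a k b => (b + (pr (a, k)).*2).*2.+1
  end.

Definition dec (n : nat) : el :=
  if odd n then Pa (unp (n./2)./2).1 (unp (n./2)./2).2 (odd n./2) else An n./2.

Lemma encK : cancel enc dec.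
Proof.
case=> [a|a k b] /=; rewrite /dec.
  by rewrite odd_double doubleK.
set m := (b + (pr (a, k)).*2).
have Ho : odd m.*2.+1 = true by rewrite /= odd_double.
have Hh : (m.*2.+1)./2 = m by rewrite /= uphalf_double.
rewrite Ho Hh /m half_bit_double prK oddD odd_double addbF.
by case: b {m Ho Hh}.
Qed.

Lemma decK : cancel dec enc.
Proof.
move=> n; rewrite /dec; case On: (odd n) => /=.
  rewrite -surjective_pairing unpK odd_double_half.
  by rewrite -[RHS](odd_double_half n) On.
by rewrite -[RHS](odd_double_half n) On.
Qed.

Lemma enc_inj : injective enc. Proof. exact: can_inj encK. Qed.
Lemma dec_inj : injective dec. Proof. exact: can_inj decK. Qed.

Section Gadget.
Variable h : nat -> nat -> bool.

Definition ev (a k : nat) : bool :=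
  ((0 < (unp a).2)%N && ~~ h (unp a).1 (unp a).2.-1) ||
  has (fun k' => h (unp a).1 ((unp a).2 + k')) (iota 0 k.+1).

Lemma ev_mono a k : ev a k -> ev a k.+1.
Proof.
rewrite /ev => /orP [->//|H]; apply/orP; right.
by rewrite -addn1 iotaD has_cat H.
Qed.

Lemma ev_le a k k' : (k <= k')%N -> ev a k -> ev a k'.
Proof.
move=> /subnK <-; elim: (k' - k)%N => [|n IH] H; first by rewrite add0n.
by rewrite addSn; apply: ev_mono; exact: IH.
Qed.

Definition first a k := ev a k && ((k == 0%N) || ~~ ev a k.-1).

Lemma first_uniq a k k' : first a k -> first a k' -> k = k'.
Proof.
move=> /andP [e1 f1] /andP [e2 f2]; case: (ltngtP k k') => // lt.
- move: f2; case: k' e2 lt => [|k'] //= e2 lt /negP H; exfalso; apply: H.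
  by apply: ev_le e1; rewrite -ltnS.
- move: f1; case: k e1 lt => [|k] //= e1 lt /negP H; exfalso; apply: H.
  by apply: ev_le e2; rewrite -ltnS.
Qed.

Lemma ex_first a k : ev a k -> exists k', first a k'.
Proof.
elim: k => [|k IH] H; first by exists 0%N; rewrite /first H.
case E: (ev a k); first exact: IH.
by exists k.+1; rewrite /first H /= E.
Qed.

Definition Rel (v w : el) : bool :=
  match v, w with
  | An a, Pa a' k b => ~~ b && (a' == a) && first a k
  | Pa a k b, Pa a' k' b' => ~~ b && b' && (a' == a) &&
       (((k' == k) && ~~ ev a k) || ((k == k'.+1) && ev a k'))
  | _, _ => false
  end.

Definition Rsym v w := Rel v w || Rel w v.

Lemma Rsym_sym v w : Rsym v w = Rsym w v.
Proof. by rewrite /Rsym orbC. Qed.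

Lemma Rsym_irr v : ~~ Rsym v v.
Proof. by rewrite /Rsym orbb; case: v => [a|a k []] /=; rewrite ?andbF. Qed.

Lemma nbA a w : Rsym (An a) w <-> exists k, w = Pa a k false /\ first a k.
Proof.
rewrite /Rsym; case: w => [a'|a' k' b'] /=; first by split => // -[k []].
rewrite orbF; split.
  by case: b' => //= /andP [/eqP -> H]; exists k'.
by move=> [k [[-> -> ->] H]]; rewrite eqxx.
Qed.

Lemma nbP a k w : Rsym (Pa a k false) w <->
  [\/ w = An a /\ first a k, w = Pa a k true /\ ~~ ev a k |
      exists k', k = k'.+1 /\ w = Pa a k' true /\ ev a k'].
Proof.
rewrite /Rsym; case: w => [a'|a' k' b'] /=.
  split; first by move=> /andP [/eqP <- H]; constructor 1.
  by case=> [[[->] H]|[]|[? [_ []]]] //; rewrite eqxx.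
case: b'; rewrite /= ?andbF ?andFb ?orbF; last by split => // -[[]|[]|[? [_ []]]].
split.
  move=> /andP [/eqP ->] /orP [/andP [/eqP -> H]|/andP [/eqP -> H]].
    by constructor 2.
  by constructor 3; exists k'.
case=> [[]//|[[-> ->] H]|[k0 [-> [[-> ->] H]]]]; rewrite eqxx /=.
  by rewrite eqxx H.
by rewrite eqxx H orbT.
Qed.

Lemma nbQ a k w : Rsym (Pa a k true) w <->
  (w = Pa a k false /\ ~~ ev a k) \/ (w = Pa a k.+1 false /\ ev a k).
Proof.
rewrite /Rsym; case: w => [a'|a' k' b'] /=.
  by split => // -[[]|[]].
case: b' => /=; rewrite ?andbF ?orbF /=; first by split => // -[[]|[]].
split.
  move=> /andP [/eqP ->] /orP [/andP [/eqP -> H]|/andP [/eqP -> H]].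
    by left.
  by right.
case=> [[[-> ->] H]|[[-> ->] H]]; rewrite eqxx /=.
  by rewrite eqxx H.
by rewrite eqxx H orbT.
Qed.

Lemma Rsym_fun v w w' : Rsym v w -> Rsym v w' -> w = w'.
Proof.
case: v => [a|a k []].
- by move=> /nbA [k [-> f1]] /nbA [k' [-> f2]]; rewrite (first_uniq f1 f2).
- move=> /nbQ [[-> e1]|[-> e1]] /nbQ [[-> e2]|[-> e2]] //.
  + by rewrite e2 in e1.
  + by rewrite e1 in e2.
- have ex3 : forall w1 w2, first a k -> k = w1.+1 -> ev a w1 -> w2 = w2.
    by [].
  move=> H1 H2.
  have F1 : first a k -> ~~ ev a k -> False by move=> /andP [-> _].
  have F2 : first a k -> forall k', k = k'.+1 -> ev a k' -> False.
    by move=> /andP [_] + k' E; rewrite E /= => /negPf ->.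
  have F3 : ~~ ev a k -> forall k', k = k'.+1 -> ev a k' -> False.
    by move=> + k' E /ev_mono; rewrite E => /negPf ->.
  case/nbP: H1 => [[-> f1]|[-> e1]|[k1 [E1 [-> e1]]]];
  case/nbP: H2 => [[-> f2]|[-> e2]|[k2 [E2 [-> e2]]]] //.
  + by exfalso; exact: F1 f1 e2.
  + by exfalso; exact: F2 f1 _ E2 e2.
  + by exfalso; exact: F1 f2 e1.
  + by exfalso; exact: F3 e1 _ E2 e2.
  + by exfalso; exact: F2 f2 _ E1 e1.
  + by exfalso; exact: F3 e2 _ E1 e1.
  + by rewrite E1 in E2; case: E2 => ->.
Qed.

Lemma Pa_matched a k b : exists w, Rsym (Pa a k b) w.
Proof.
case: b.
  case E: (ev a k); [exists (Pa a k.+1 false)|exists (Pa a k false)]; apply/nbQ.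
    by right.
  by left; rewrite E.
case E: (ev a k); last by exists (Pa a k true); apply/nbP; constructor 2; rewrite E.
case F: ((k == 0%N) || ~~ ev a k.-1).
  by exists (An a); apply/nbP; constructor 1; split => //; rewrite /first E F.
move: F; case: k E => [|k] //= E /negbFE F.
by exists (Pa a k true); apply/nbP; constructor 3; exists k.
Qed.

Lemma An_matched a : (exists w, Rsym (An a) w) <-> exists k, ev a k.
Proof.
split; first by move=> [w /nbA [k [_ /andP [H _]]]]; exists k.
by move=> [k /ex_first [k' F]]; exists (Pa a k' false); apply/nbA; exists k'.
Qed.

Definition noev a := forall k, ~~ ev a k.

Lemma noevE a : noev a <->
  (((unp a).2 == 0%N) || h (unp a).1 (unp a).2.-1) /\
  (forall s, ((unp a).2 <= s)%N -> ~~ h (unp a).1 s).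
Proof.
rewrite /noev /ev; set i := (unp a).1; set t := (unp a).2; split.
  move=> H; split.
    have := H 0%N; rewrite negb_or => /andP [+ _].
    by rewrite negb_and negbK -eqn0Ngt.
  move=> s ts; have := H (s - t)%N; rewrite negb_or => /andP [_].
  move=> /hasPn /(_ (s - t)%N); rewrite mem_iota add0n ltnSn subnKC //.
  by move=> /(_ isT).
move=> [H1 H2] k; rewrite negb_or; apply/andP; split.
  by rewrite negb_and negbK -eqn0Ngt.
apply/hasPn => k' _; apply: H2; exact: leq_addr.
Qed.

Definition hfin i := exists T, forall s, (T <= s)%N -> ~~ h i s.

Lemma block_uniq i t t' : noev (pr (i, t)) -> noev (pr (i, t')) -> t = t'.
Proof.
move=> /noevE; rewrite prK /= => [[H1 H2]] /noevE; rewrite prK /= => [[H1' H2']].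
case: (ltngtP t t') => // lt.
- move: H1'; case: t' lt H2' => //= t' lt _.
  by rewrite (negPf (H2 t' _)) // -ltnS.
- move: H1; case: t lt H2 => //= t lt _.
  by rewrite (negPf (H2' t _)) // -ltnS.
Qed.

Lemma block_ex i : hfin i -> exists t, noev (pr (i, t)).
Proof.
move=> [T]; elim: T => [|T IH] H.
  by exists 0%N; apply/noevE; rewrite prK /=; split => // s _; exact: H.
case hT: (h i T).
  by exists T.+1; apply/noevE; rewrite prK /=; split => //; rewrite hT orbT.
apply: IH => s; rewrite leq_eqVlt => /predU1P [<-|]; first by rewrite hT.
exact: H.
Qed.

Lemma block_fin i t : noev (pr (i, t)) -> hfin i.
Proof. by move=> /noevE; rewrite prK /= => -[_ H]; exists t. Qed.

Definition Unm := [set m : nat | ~ exists y, Rsym (dec m) (dec y)].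
Definition Mat := [set m : nat | exists y, Rsym (dec m) (dec y)].

Lemma UnmE m : Unm m <-> exists a, dec m = An a /\ noev a.
Proof.
split.
  move=> Hm; case E: (dec m) => [a|a k b].
    exists a; split => // k; apply/negP => ek; apply: Hm.
    have [w Hw] := proj2 (An_matched a) (ex_intro _ k ek).
    by exists (enc w); rewrite encK E.
  by exfalso; have [w Hw] := Pa_matched a k b; apply: Hm; exists (enc w); rewrite encK E.
move=> [a [E Ha]] [y]; rewrite E => Hy.
have [k ek] := proj1 (An_matched a) (ex_intro _ (dec y) Hy).
by move: (Ha k); rewrite ek.
Qed.

Lemma Mat_inf : infinite_set Mat.
Proof.
apply/infinite_distinct => n; exists (fun k => enc (Pa 0 k false)); split.
  move=> i _; have [w Hw] := Pa_matched 0 i false.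
  by exists (enc w); rewrite !encK.
by move=> i j _ _ /enc_inj [].
Qed.

Hypothesis hmono : forall i n, h i n -> h i.+1 n.

Lemma hfin_down i j : (i <= j)%N -> hfin j -> hfin i.
Proof.
move=> /subnK <-; elim: (j - i)%N => [|k IH]; first by rewrite add0n.
move=> [T HT]; apply: IH; exists T => s /HT; apply: contra; exact: hmono.
Qed.

Lemma Unm_inf : infinite_set Unm <-> forall i, hfin i.
Proof.
split.
  move=> Hinf i0; apply: contrapT => nf; apply: Hinf.
  have Hs : forall i, exists t, (exists t', noev (pr (i, t'))) -> noev (pr (i, t)).
    move=> i; case: (pselect (exists t', noev (pr (i, t')))) => [[t Ht]|nt].
      by exists t.
    by exists 0%N => H; exfalso; exact: nt.
  have [sel Hsel] := choice Hs.
  apply: (@sub_finite_set _ _ ((fun i => enc (An (pr (i, sel i)))) @` `I_i0)); last first.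
    exact: finite_image.
  move=> m /UnmE [a [E Ha]].
  have Ha' : noev (pr ((unp a).1, (unp a).2)) by rewrite -surjective_pairing unpK.
  exists (unp a).1.
    rewrite /=; case: (ltnP (unp a).1 i0) => // le; exfalso; apply: nf.
    exact: hfin_down le (block_fin Ha').
  have := block_uniq Ha' (Hsel _ (ex_intro (fun t' => noev (pr ((unp a).1, t'))) _ Ha')) => <-.
  by rewrite -surjective_pairing unpK -E decK.
move=> H.
have [t Ht] := choice (fun i => block_ex (H i)).
apply/infinite_distinct => n; exists (fun i => enc (An (pr (i, t i)))); split.
  by move=> i _; apply/UnmE; exists (pr (i, t i)); rewrite encK.
by move=> i j _ _ /enc_inj [] /(congr1 unp); rewrite !prK => -[].
Qed.

End Gadget.

Definition c2 (m y : nat) : diag_index L2 :=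
  existT _ tt (fun i : 'I_2 => if val i == 0%N then m else y).

Definition Rx (x : ModSpace L2) m y := x (c2 m y) = true.

Definition goodx (x : ModSpace L2) :=
  [/\ (forall m, ~ Rx x m m), (forall m y, Rx x m y -> Rx x y m) &
      (forall m y z, Rx x m y -> Rx x m z -> y = z)].

Definition G2 (i j : nat) : set (ModSpace L2) :=
  [set x | [/\ goodx x, ((i <= (unp j).1)%N /\ Rx x (unp j).1 (unp (unp j).2).1) &
    ((i <= (unp (unp j).2).2)%N /\ forall z, ~ Rx x (unp (unp j).2).2 z)]].

Lemma Mod_T2E : Mod T2 = \bigcap_i \bigcup_j G2 i j.
Proof.
apply/seteqP; split => x.
  move=> /(@T2_K2 (struct_of_diag x) id) [Hirr Hsym Hfun Hm Hu] i _.
  have [m [im [y Hy]]] := proj1 (nat_infinite _) Hm i.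
  have [m' [im' Hm']] := proj1 (nat_infinite _) Hu i.
  exists (pr (m, pr (y, m'))) => //; rewrite /G2 /= !prK /=; split.
  - by split; [exact Hirr|exact Hsym|exact Hfun].
  - by split.
  - by split => // z Hz; apply: Hm'; exists z.
move=> H; apply/(@T2_K2 (struct_of_diag x) id).
have [j _ [[H1 H2 H3] _ _]] := H 0%N I.
split => //.
- apply/nat_infinite => N; have [j' _ [_ [Nm Hm] _]] := H N I.
  by exists (unp j').1; split => //; exists (unp (unp j').2).1; exact Hm.
- apply/nat_infinite => N; have [j' _ [_ _ [Nm Hm]]] := H N I.
  by exists (unp (unp j').2).2; split => // -[z Hz]; exact (Hm z Hz).
Qed.

Lemma open_notG2 i j : open (~` G2 i j).
Proof.
apply: open_loc => x nG.
have agree1 m y l : (forall c, memT c (c2 m y :: l) -> forall y' : ModSpace L2,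
  False) -> True by [].
case: (pselect (goodx x)) => gx; last first.
  case: (pselect (forall m, ~ Rx x m m)) => h1; last first.
    move/existsNP: h1 => [m /contrapT Hm].
    exists [:: c2 m m] => y Hy [[Hy1 _ _] _ _]; apply: (Hy1 m).
    by rewrite /Rx Hy //=; left.
  case: (pselect (forall m y, Rx x m y -> Rx x y m)) => h2; last first.
    move/existsNP: h2 => [m /existsNP [y0 /not_implyP [H1 H2]]].
    exists [:: c2 m y0; c2 y0 m] => y Hy [[_ Hy2 _] _ _]; apply: H2.
    rewrite /Rx -Hy /=; last by right; left.
    by apply: Hy2; rewrite /Rx Hy //=; left.
  case: (pselect (forall m y z, Rx x m y -> Rx x m z -> y = z)) => h3; last first.
    move/existsNP: h3 => [m /existsNP [y0 /existsNP [z0 /not_implyP [H1 /not_implyP [H2 H3]]]]].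
    exists [:: c2 m y0; c2 m z0] => y Hy [[_ _ Hy3] _ _]; apply: H3; apply: (Hy3 m).
      by rewrite /Rx Hy //=; left.
    by rewrite /Rx Hy //=; right; left.
  by exfalso; apply: gx.
set m := (unp j).1; set y0 := (unp (unp j).2).1; set m' := (unp (unp j).2).2.
case: (pselect ((i <= m)%N /\ Rx x m y0)) => hA; last first.
  case: (leqP i m) => im; last by exists [::] => y _ [_ [] ]; rewrite leqNgt im.
  exists [:: c2 m y0] => y Hy [_ [_ Hy2] _]; apply: hA; split => //.
  by rewrite /Rx -Hy //=; left.
case: (pselect ((i <= m')%N /\ forall z, ~ Rx x m' z)) => hB; last first.
  case: (leqP i m') => im; last by exists [::] => y _ [_ _ []]; rewrite leqNgt im.
  have [z Hz] : exists z, Rx x m' z.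
    apply: contrapT => nz; apply: hB; split => // z Hz; apply: nz; by exists z.
  exists [:: c2 m' z] => y Hy [_ _ [_ Hy3]]; apply: (Hy3 z).
  by rewrite /Rx Hy //=; left.
by exfalso; apply: nG.
Qed.

Lemma Pi0_Mod_T2 : Pi0 3 (Mod T2).
Proof.
exists (fun i => ~` \bigcup_j G2 i j); split.
  move=> i; exists (G2 i); split; first exact: open_notG2.
  by rewrite setCK.
by rewrite Mod_T2E setC_bigcap.
Qed.

Lemma loc_upto (T : Type) (Q : nat -> cantor_space -> T) N :
  (forall n, locdet (Q n)) ->
  forall x, exists M, forall y, cyl x M y -> forall n, (n <= N)%N -> Q n y = Q n x.
Proof.
move=> HQ x; elim: N => [|N [M HM]].
  have [M HM] := HQ 0%N x; exists M => y Hy n; rewrite leqn0 => /eqP ->.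
  exact: HM.
have [M' HM'] := HQ N.+1 x; exists (maxn M M') => y Hy n.
rewrite leq_eqVlt => /predU1P [->|].
  apply: HM'; exact (cyl_sub (leq_maxr M M') Hy).
by rewrite ltnS; apply: HM; exact (cyl_sub (leq_maxl M M') Hy).
Qed.

Definition agree (h h' : nat -> nat -> bool) I N :=
  forall i n, (i <= I)%N -> (n <= N)%N -> h i n = h' i n.

Definition dep (F : (nat -> nat -> bool) -> bool) :=
  exists I N, forall h h', agree h h' I N -> F h = F h'.

Lemma agree_le h h' I N I' N' : (I' <= I)%N -> (N' <= N)%N ->
  agree h h' I N -> agree h h' I' N'.
Proof.
move=> lI lN H i n iI nN; apply: H; [exact: leq_trans iI lI|exact: leq_trans nN lN].
Qed.

Lemma dep_const b : dep (fun _ => b).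
Proof. by exists 0%N, 0%N. Qed.

Lemma dep_op2 (op : bool -> bool -> bool) F G :
  dep F -> dep G -> dep (fun h => op (F h) (G h)).
Proof.
move=> [I [N HF]] [I' [N' HG]]; exists (maxn I I'), (maxn N N') => h h' H.
rewrite (HF h h') ?(HG h h') //; apply: agree_le H;
  by rewrite ?leq_maxl ?leq_maxr.
Qed.

Lemma dep_neg F : dep F -> dep (fun h => ~~ F h).
Proof. by move=> [I [N HF]]; exists I, N => h h' /HF ->. Qed.

Lemma dep_ev a k : dep (fun h => ev h a k).
Proof.
exists (unp a).1, ((unp a).2 + k)%N => h h' H; rewrite /ev.
rewrite H //; last by apply: leq_trans (leq_pred _) (leq_addr _ _).
congr orb; apply: eq_in_has => k'; rewrite mem_iota add0n ltnS => kk.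
by rewrite H // leq_add2l.
Qed.

Ltac depc := repeat first [apply: dep_const | apply: dep_ev | apply: dep_neg |
  apply: dep_op2].

Lemma dep_Rel v w : dep (fun h => Rel h v w).
Proof.
case: v => [a|a k b]; case: w => [a'|a' k' b'] /=; try exact: dep_const.
  rewrite /first; depc.
depc.
Qed.

Lemma dep_Rsym v w : dep (fun h => Rsym h v w).
Proof. by rewrite /Rsym; apply: (dep_op2 orb); exact: dep_Rel. Qed.

Lemma locdet_dep (H : cantor_space -> nat -> nat -> bool) F :
  (forall i n, locdet (fun x => H x i n)) -> dep F -> locdet (fun x => F (H x)).
Proof.
move=> HH [I [N HF]] x.
pose Q i := fun x => fun n => if (n <= N)%N then H x i n else false.
have HQ i : locdet (Q i).
  move=> z; have [M HM] := @loc_upto _ (fun n x => H x i n) N (HH i) z.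
  exists M => y Hy; apply: funext => n; rewrite /Q; case: ifP => // nN.
  exact: HM.
have [M HM] := @loc_upto _ Q I HQ x.
exists M => y Hy; apply: HF => i n iI nN.
by have := congr1 (fun f => f n) (HM y Hy i iI); rewrite /Q nN.
Qed.

Section Red2.
Variable U : nat -> nat -> set cantor_space.
Hypothesis oU : forall i j, open (U i j).

Definition hh (x : cantor_space) (i n : nat) : bool :=
  has (fun i' => red (U i') x n) (iota 0 i.+1).

Lemma hh_mono x i n : hh x i n -> hh x i.+1 n.
Proof. by rewrite /hh -(addn1 i.+1) iotaD has_cat => ->. Qed.

Lemma hh_loc i n : locdet (fun x => hh x i n).
Proof.
move=> x; have [M HM] := @loc_upto _ (fun i' x => red (U i') x n) i
  (fun i' => red_loc (U i') n) x.
exists M => y Hy; apply: eq_in_has => i'; rewrite mem_iota add0n ltnS => ii.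
exact: HM.
Qed.

Definition f2 (x : cantor_space) : ModSpace L2 :=
  fun d => Rsym (hh x) (dec (projT2 d ord0)) (dec (projT2 d ord_max)).

Lemma f2_cont : continuous f2.
Proof.
apply: cont_into => d; rewrite /f2.
apply: (locdet_dep (H := hh) (F := fun h => Rsym h _ _)); first exact: hh_loc.
exact: dep_Rsym.
Qed.

Lemma hfin_iff x : (forall i, hfin (hh x) i) <->
  forall i, exists N, forall n, (N <= n)%N -> ~~ red (U i) x n.
Proof.
split.
  move=> H i; have [T HT] := H i; exists T => n /HT; apply: contra => r.
  by apply/hasP; exists i => //; rewrite mem_iota add0n ltnSn.
move=> H; suff K : forall i, exists T, forall n, (T <= n)%N ->
    forall i', (i' <= i)%N -> ~~ red (U i') x n.
  move=> i; have [T HT] := K i; exists T => n Tn; apply/hasPn => i'.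
  by rewrite mem_iota add0n ltnS; exact: HT.
elim=> [|i [T HT]].
  have [N HN] := H 0%N; exists N => n Nn i'; rewrite leqn0 => /eqP ->.
  exact: HN.
have [N HN] := H i.+1; exists (maxn T N) => n Tn i'.
rewrite leq_eqVlt => /predU1P [->|]; first by apply: HN; apply: leq_trans Tn; exact: leq_maxr.
by rewrite ltnS; apply: HT; apply: leq_trans Tn; exact: leq_maxl.
Qed.

Lemma R2f2 x m y : @R2 (struct_of_diag (f2 x)) m y <-> Rsym (hh x) (dec m) (dec y).
Proof. by []. Qed.

Lemma f2_spec x : (forall i, ~ forall j, U i j x) <-> Mod T2 (f2 x).
Proof.
have E : (forall i, ~ forall j, U i j x) <-> forall i, exists N, forall n, (N <= n)%N -> ~~ red (U i) x n.
  split.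
    move=> H i; have := H i; rewrite (red_spec (oU i)) => nH.
    apply: contrapT => nN; apply: nH => N; apply: contrapT => nn; apply: nN.
    exists N => n Nn; apply/negP => r; apply: nn; by exists n.
  move=> H i; rewrite (red_spec (oU i)) => Hinf; have [N HN] := H i.
  by have [n [Nn r]] := Hinf N; move: (HN n Nn); rewrite r.
rewrite E -hfin_iff -(Unm_inf (@hh_mono x)).
rewrite /Mod /= (@T2_K2 (struct_of_diag (f2 x)) id); split.
  move=> Hu; split.
  - by move=> m; apply/negP; exact: Rsym_irr.
  - by move=> m y; rewrite !R2f2 Rsym_sym.
  - by move=> m y z H1 H2; apply: dec_inj; exact: Rsym_fun H1 H2.
  - exact: Mat_inf.
  - exact: Hu.
by case.
Qed.

End Red2.

Lemma Pi0_complete_T2 : Pi0_complete 3 (Mod T2).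
Proof.
split; first exact: Pi0_Mod_T2.
move=> B [F [HF EF]].
have [G HG] := choice HF.
pose U i j := ~` G i j.
have oU : forall i j, open (U i j) by move=> i j; exact: (proj1 (HG i)).
exists (f2 U); split; first exact: f2_cont.
apply/seteqP; split => x.
  move=> Bx; apply/f2_spec => // i HU.
  have : (~` B) x by rewrite EF; exists i => //; rewrite -[F i]setCK (proj2 (HG i)) => -[j _ Gj]; exact: HU j Gj.
  by [].
move=> /(f2_spec oU) H; apply: contrapT => nB.
have : (~` B) x by [].
rewrite EF => -[i _ Fi]; apply: (H i) => j Gj.
have : (~` F i) x by rewrite (proj2 (HG i)); exists j.
by [].
Qed.

Local Close Scope card_scope.
Local Close Scope classical_set_scope.

Theorem mainTheorem12 :
  (forall k : nat, (k = 1 \/ k = 2)%N ->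
     exists (L : vocab) (T : theory L),
       (forall phi, T phi -> sentence phi) /\
       Ek_axiomatizable k T /\ aleph0_categorical T /\ Pi0_complete k.+1 (Mod T))
  /\
  (Ek_axiomatizable 1 T1 /\ aleph0_categorical T1 /\ Pi0_complete 2 (Mod T1))
  /\
  (Ek_axiomatizable 2 T2 /\ aleph0_categorical T2 /\ Pi0_complete 3 (Mod T2)).
Proof.
have H1 : Ek_axiomatizable 1 T1 /\ aleph0_categorical T1 /\ Pi0_complete 2 (Mod T1).
  by split; [exact: T1_Ek|split; [exact: T1_categorical|exact: Pi0_complete_T1]].
have H2 : Ek_axiomatizable 2 T2 /\ aleph0_categorical T2 /\ Pi0_complete 3 (Mod T2).
  by split; [exact: T2_Ek|split; [exact: T2_categorical|exact: Pi0_complete_T2]].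
split; last by split.
move=> k [->|->].
  by exists L1, T1; split => // phi; exact: Th_sentence.
by exists L2, T2; split => // phi; exact: Th_sentence.
Qed.
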